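(* Let $n\ge 2$ and let $f$ be the function on $\mathbb{F}_{2^n}$ defined by $f(0)=1$, $f(1)=0$ and $f(x)=x^{-1}$ for $x\notin\{0,1\}$. For $a,b\in\mathbb{F}_{2^n}$ let $\nabla_f(a,b)$ be the number of $x\in\mathbb{F}_{2^n}$ with $f(x+a+b)+f(x+a)+f(x+b)+f(x)=0$, and for $i\in\{0,4,8\}$ let $\omega_i$ be the number of pairs $(a,b)\in\mathbb{F}_{2^n}\times\mathbb{F}_{2^n}$ with $ab(a+b)\neq 0$ and $\nabla_f(a,b)=i$. Then $\omega_8=6$ if $3\mid n$ and $\omega_8=0$ if $3\nmid n$; \[ \omega_4=\begin{cases}2^{n+1}-14,& 2\mid n,\ 3\mid n,\\ 2^{n+1}-2,& 2\mid n,\ 3\nmid n,\\ 2^{n+1}-16,& 2\nmid n,\ 3\mid n,\\ 2^{n+1}-4,& 2\nmid n,\ 3\nmid n;\end{cases} \qquad \omega_0=\begin{cases}2^{2n}-5\cdot2^n+10,& 2\mid n,\ 3\mid n,\\ 2^{2n}-5\cdot2^n+4,& 2\mid n,\ 3\nmid n,\\ 2^{2n}-5\cdot2^n+12,& 2\nmid n,\ 3\mid n,\\ 2^{2n}-5\cdot2^n+6,& 2\nmid n,\ 3\nmid n.\end{cases} \]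
   Context: This is the second-order zero differential spectrum of $Inv\circ(0,1)$, where $Inv(x)=x^{2^n-2}$ and $(0,1)$ is the transposition swapping $0$ and $1$. Pairs with $ab(a+b)=0$ (for which $\nabla_f(a,b)=2^n$) are not counted in the $\omega_i$. *)

(* Defs.v *)
From HB Require Import structures.
From mathcomp Require Import all_boot all_order all_algebra all_field.
Set Implicit Arguments. Unset Strict Implicit. Unset Printing Implicit Defensive.
Import GRing.Theory.
Local Open Scope ring_scope.

Definition finv01 (F : finFieldType) (x : F) : F :=
  if x == 0 then 1 else if x == 1 then 0 else x^-1.

Definition nabla (F : finFieldType) (a b : F) : nat :=
  #|[set x : F | finv01 (x + a + b) + finv01 (x + a) + finv01 (x + b) + finv01 x == 0]|.

Definition omega (F : finFieldType) (i : nat) : nat :=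
  #|[set p : F * F | (p.1 * p.2 * (p.1 + p.2) != 0) && (nabla p.1 p.2 == i)]|.

(* Main.v *)
Require Import Defs.
From HB Require Import structures.
From mathcomp Require Import all_boot all_order all_algebra all_field.
From mathcomp Require Import cyclic.
From mathcomp Require Import ring zify.
Set Implicit Arguments. Unset Strict Implicit. Unset Printing Implicit Defensive.
Import GRing.Theory.
Local Open Scope ring_scope.

Section Char2.
Variable F : fieldType.
Hypothesis h2 : (2 : F) = 0.

Lemma addxx (x : F) : x + x = 0.
Proof. by rewrite -mulr2n -mulr_natl h2 mul0r. Qed.

Lemma oppE (x : F) : - x = x.
Proof. by apply/eqP; rewrite eq_sym -subr_eq0 opprK addxx. Qed.

Lemma addK2 (x y : F) : x + y + y = x.
Proof. by rewrite -addrA addxx addr0. Qed.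

Lemma add_eq0 (x y : F) : (x + y == 0) = (x == y).
Proof. by rewrite -[x == y]subr_eq0 oppE. Qed.

Lemma add_eq (x y z : F) : (x + y == z) = (x == z + y).
Proof. by rewrite -[x == z + y]subr_eq oppE. Qed.

End Char2.

Section Nabla.
Variable F : finFieldType.
Hypothesis h2 : (2 : F) = 0.
Variables a b : F.
Hypotheses (ha : a != 0) (hb : b != 0) (hab : a != b).

Definition Df (x : F) := finv01 (x + a + b) + finv01 (x + a) + finv01 (x + b) + finv01 x.
Definition inV (x : F) := (x == 0) || (x == a) || (x == b) || (x == a + b).
Definition Aof := (a == 1) || (b == 1) || (a + b == 1).
Definition e2 := a ^+ 2 + a * b + b ^+ 2.
Definition e3 := a * b * (a + b).
Definition condV := if Aof then e2 == 0 else e2 == e3.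
Definition condW := ~~ Aof && (e2 == 1).

Lemma finv0 : finv01 (0 : F) = 1. Proof. by rewrite /finv01 eqxx. Qed.
Lemma finv1 : finv01 (1 : F) = 0. Proof. by rewrite /finv01 oner_eq0 eqxx. Qed.
Lemma finvE (x : F) : x != 0 -> x != 1 -> finv01 x = x^-1.
Proof. by rewrite /finv01 => /negbTE -> /negbTE ->. Qed.

Lemma Df_a x : Df (x + a) = Df x.
Proof.
rewrite /Df (addK2 h2).
ring.
Qed.

Lemma Df_b x : Df (x + b) = Df x.
Proof.
rewrite /Df (addK2 h2) [x + b + a]addrAC (addK2 h2).
ring.
Qed.

Lemma inV_a x : inV (x + a) = inV x.
Proof.
rewrite /inV (add_eq0 h2) !(add_eq h2) (addxx h2) [a + b + a]addrC addrA (addxx h2) add0r (addrC b a).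
by move: (x == 0) (x == a) (x == b) (x == a + b) => [] [] [] [].
Qed.

Lemma inV_b x : inV (x + b) = inV x.
Proof.
rewrite /inV (add_eq0 h2) !(add_eq h2) (addxx h2) (addK2 h2).
by move: (x == 0) (x == a) (x == b) (x == a + b) => [] [] [] [].
Qed.

Lemma inv4 (y : F) : y != 0 -> y + a != 0 -> y + b != 0 -> y + a + b != 0 ->
  (y + a + b)^-1 + (y + a)^-1 + (y + b)^-1 + y^-1 = e3 / (y * (y + a) * (y + b) * (y + a + b)).
Proof.
move=> h1 h3 h4 h5.
have -> : (y + a + b)^-1 + (y + a)^-1 + (y + b)^-1 + y^-1 =
   e3 / (y * (y + a) * (y + b) * (y + a + b)) +
   2 * (a * b * y / (y * (y + a) * (y + b) * (y + a + b)) + (y + a)^-1 + (y + b)^-1).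
  rewrite /e3. field. by rewrite h1 h3 h4 h5.
by rewrite h2 mul0r addr0.
Qed.


Lemma frac_eq0 (u v : F) : v != 0 -> (u / v == 0) = (u == 0).
Proof. by move=> hv; rewrite mulf_eq0 invr_eq0 (negbTE hv) orbF. Qed.

Lemma div_eq1 (u v : F) : v != 0 -> (u / v == 1) = (u == v).
Proof. by move=> hv; apply/eqP/eqP => [/divr1_eq // | ->]; exact: divff. Qed.

Lemma eq_addr (x y : F) : (x == x + y) = (y == 0).
Proof. by rewrite -{1}[x]addr0 (inj_eq (addrI x)) eq_sym. Qed.

Lemma eq_addl (x y : F) : (y == x + y) = (x == 0).
Proof. by rewrite addrC eq_addr. Qed.

Lemma hab0 : a + b != 0.
Proof. by rewrite (add_eq0 h2). Qed.

Lemma e3_neq0 : e3 != 0.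
Proof. by rewrite /e3 !mulf_neq0 // hab0. Qed.

Lemma inv3 : (a + b)^-1 + a^-1 + b^-1 = e2 / e3.
Proof.
have h := hab0.
have -> : (a + b)^-1 + a^-1 + b^-1 = e2 / e3 + 2 * (a + b)^-1.
  rewrite /e2 /e3. field. by rewrite ha hb h.
by rewrite h2 mul0r addr0.
Qed.

Lemma Df0E : Df 0 = e2 / e3 + (~~ Aof)%:R.
Proof.
rewrite /Df !add0r finv0 /Aof.
have hab1 := hab0.
case: (eqVneq a 1) => [Ha|Ha] /=.
  have Hb : b != 1 by rewrite -Ha eq_sym.
  have f1b : finv01 (1 + b) = (1 + b)^-1.
    by apply: finvE; [rewrite (add_eq0 h2) eq_sym | rewrite eq_sym eq_addr].
  rewrite -inv3 Ha finv1 invr1 addr0 f1b (finvE hb Hb); ring.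
case: (eqVneq b 1) => [Hb|Hb] /=.
  have fa1 : finv01 (a + 1) = (a + 1)^-1.
    by apply: finvE; [rewrite (add_eq0 h2) | rewrite eq_sym eq_addl].
  rewrite -inv3 Hb finv1 invr1 addr0 fa1 (finvE ha Ha); ring.
case: (eqVneq (a + b) 1) => [Hc|Hc] /=.
  rewrite -inv3 Hc finv1 (finvE ha Ha) (finvE hb Hb) invr1 add0r addr0; ring.
rewrite -inv3 (finvE ha Ha) (finvE hb Hb) finvE //.
Qed.

Lemma D0 : (Df 0 == 0) = condV.
Proof.
rewrite Df0E /condV; case: Aof => /=.
  by rewrite addr0 frac_eq0 // e3_neq0.
by rewrite (add_eq0 h2) div_eq1 // e3_neq0.
Qed.

Lemma D1 : ~~ Aof -> (Df 1 == 0) = (e2 == 1).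
Proof.
rewrite /Aof !negb_or => /andP[/andP[Ha Hb] Hc].
have hab1 := hab0.
have h1a : 1 + a != 0 by rewrite (add_eq0 h2) eq_sym.
have h1b : 1 + b != 0 by rewrite (add_eq0 h2) eq_sym.
have h1ab : 1 + a + b != 0 by rewrite -addrA (add_eq0 h2) eq_sym.
have h1a' : 1 + a != 1 by rewrite eq_sym eq_addr.
have h1b' : 1 + b != 1 by rewrite eq_sym eq_addr.
have h1ab' : 1 + a + b != 1 by rewrite -addrA eq_sym eq_addr.
have P1nz : 1 * (1 + a) * (1 + b) * (1 + a + b) != 0 by rewrite !mulf_neq0 ?oner_neq0.
rewrite /Df (finvE h1a h1a') (finvE h1b h1b') (finvE h1ab h1ab') finv1 addr0.
have := inv4 (oner_neq0 F) h1a h1b h1ab; rewrite invr1 => H.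
have -> : (1 + a + b)^-1 + (1 + a)^-1 + (1 + b)^-1 =
  e3 / (1 * (1 + a) * (1 + b) * (1 + a + b)) + 1 by rewrite -H (addK2 h2).
rewrite (add_eq0 h2) div_eq1 //.
have -> : 1 * (1 + a) * (1 + b) * (1 + a + b) = 1 + e2 + e3 + 2 * (a + b + a * b).
  by rewrite /e2 /e3; ring.
rewrite h2 mul0r addr0 [1 + e2 + e3]addrC eq_addr (add_eq0 h2).
by rewrite eq_sym.
Qed.


Lemma add_swap (x y z : F) : (x + y == z) = (x + z == y).
Proof. by rewrite !(add_eq h2) addrC. Qed.

Lemma Df_V z v : inV v -> Df (z + v) = Df z.
Proof.
move=> /orP [/orP [/orP [] | ] | ] /eqP ->.
- by rewrite addr0.
- exact: Df_a.
- exact: Df_b.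
- by rewrite addrA Df_b Df_a.
Qed.

Lemma inV_V z v : inV v -> inV (z + v) = inV z.
Proof.
move=> /orP [/orP [/orP [] | ] | ] /eqP ->.
- by rewrite addr0.
- exact: inV_a.
- exact: inV_b.
- by rewrite addrA inV_b inV_a.
Qed.

Lemma inV1 : inV 1 = Aof.
Proof. by rewrite /inV /Aof oner_eq0 /= ![1 == _]eq_sym. Qed.

Lemma Dgen x : ~~ inV x -> ~~ inV (x + 1) -> Df x != 0.
Proof.
rewrite /inV !negb_or => /andP[/andP[/andP[n0 na] nb] nab] /andP[/andP[/andP[m0 ma] mb] mab].
have x1 : x != 1 by rewrite -(add_eq0 h2).
have xa0 : x + a != 0 by rewrite (add_eq0 h2).
have xa1 : x + a != 1 by rewrite add_swap.
have xb0 : x + b != 0 by rewrite (add_eq0 h2).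
have xb1 : x + b != 1 by rewrite add_swap.
have xab0 : x + a + b != 0 by rewrite -addrA (add_eq0 h2).
have xab1 : x + a + b != 1 by rewrite -addrA add_swap.
rewrite /Df (finvE xab0 xab1) (finvE xa0 xa1) (finvE xb0 xb1) (finvE n0 x1).
by rewrite inv4 // mulf_neq0 ?e3_neq0 // invr_eq0 !mulf_neq0.
Qed.

Lemma Dcase x : (Df x == 0) = (inV x && condV) || (inV (x + 1) && condW).
Proof.
case: (boolP (inV x)) => Hx /=.
  have -> : inV (x + 1) = Aof by rewrite -inV1 addrC inV_V.
  rewrite -[x]add0r Df_V // D0 /condW.
  by case: Aof; rewrite ?andbF ?orbF.
case: (boolP (inV (x + 1))) => Hx1 /=; last by apply/negbTE/Dgen.
have ex : x = 1 + (x + 1) by rewrite addrC (addK2 h2).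
have nA : ~~ Aof by rewrite -inV1; move: Hx; rewrite {1}ex inV_V.
by rewrite ex Df_V // D1 // /condW nA.
Qed.


Lemma inVE x : inV x -> inV (x + 1) = Aof.
Proof. by move=> Hx; rewrite -inV1 addrC inV_V. Qed.

Lemma card_V : #|[set x | inV x]| = 4%N.
Proof.
have -> : [set x | inV x] = 0 |: (a |: (b |: [set a + b])).
  by apply/setP => x; rewrite !inE /inV !orbA.
rewrite !cardsU1 cards1 !inE ![0 == _]eq_sym eq_addr eq_addl (negbTE ha) (negbTE hb).
by rewrite (negbTE hab0) (negbTE hab).
Qed.

Lemma card_W : #|[set x | inV (x + 1)]| = 4%N.
Proof.
have -> : [set x | inV (x + 1)] = (fun x => x + 1) @^-1: [set x | inV x].
  by apply/setP => x; rewrite !inE.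
by rewrite card_preimset ?card_V // => u v /addIr.
Qed.

Lemma nablaE : nabla a b = (4 * condV + 4 * condW)%N.
Proof.
have -> : nabla a b = #|[set x | (inV x && condV) || (inV (x + 1) && condW)]|.
  by rewrite /nabla; apply: eq_card => x; rewrite !inE; exact: Dcase.
case cv: condV; case cw: condW => /=.
- have -> : [set x | (inV x && true) || (inV (x + 1) && true)] =
            [set x | inV x] :|: [set x | inV (x + 1)].
    by apply/setP => x; rewrite !inE !andbT.
  have I0 : [set x | inV x] :&: [set x | inV (x + 1)] = set0.
    apply/setP => x; rewrite !inE; apply/negbTE; apply/negP => /andP[H1 H2].
    by move: cw; rewrite /condW -(inVE H1) H2.
  by have := cardsUI [set x | inV x] [set x | inV (x + 1)]; rewrite I0 cards0 addn0 card_V card_W.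
- have -> : [set x | (inV x && true) || (inV (x + 1) && false)] = [set x | inV x].
    by apply/setP => x; rewrite !inE andbT andbF orbF.
  by rewrite card_V.
- have -> : [set x | (inV x && false) || (inV (x + 1) && true)] = [set x | inV (x + 1)].
    by apply/setP => x; rewrite !inE andbT andbF.
  by rewrite card_W.
- have -> : [set x | (inV x && false) || (inV (x + 1) && false)] = set0.
    by apply/setP => x; rewrite !inE !andbF.
  by rewrite cards0.
Qed.

End Nabla.

Section Unity.
Variable F : finFieldType.

Lemma expf_N (x : F) : x != 0 -> x ^+ #|F|.-1 = 1.
Proof.
move=> hx; apply: (mulfI hx); rewrite mulr1 -exprS prednK ?expf_card //.
by apply: ltn_trans (finNzRing_gt1 F).
Qed.

Lemma unity_card m : (0 < m)%N -> (m %| #|F|.-1)%N -> #|[set x : F | x ^+ m == 1]| = m.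
Proof.
move=> m0 mN.
have N0 : (0 < #|F|.-1)%N by rewrite -ltnS prednK ?finNzRing_gt1 //; apply: ltn_trans (finNzRing_gt1 F).
have [z zrs zprim] : exists2 z, z \in enum [set x : F | x != 0] & (#|F|.-1).-primitive_root z.
  apply/hasP; apply: has_prim_root => //.
  - apply/allP => x; rewrite mem_enum inE unity_rootE => hx; apply/eqP; exact: expf_N.
  - exact: enum_uniq.
  - rewrite -cardE (_ : [set x : F | x != 0] = [set~ 0]) ?cardsC1 //.
    by apply/setP => x; rewrite !inE.
have wprim := dvdn_prim_root zprim mN.
set w := z ^+ _ in wprim.
have -> : [set x : F | x ^+ m == 1] = [set w ^+ (nat_of_ord i) | i : 'I_m].
  apply/setP => x; rewrite inE; apply/eqP/imsetP => [/(prim_rootP wprim) [i ->] | [i _ ->]].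
    by exists i.
  by rewrite -exprM mulnC exprM (prim_expr_order wprim) expr1n.
rewrite card_imset ?card_ord // => i j /eqP.
by rewrite (eq_prim_root_expr wprim) !modn_small // => /eqP /val_inj.
Qed.

Lemma unity_coprime m (x : F) : (0 < m)%N -> coprime m #|F|.-1 -> x ^+ m = 1 -> x = 1.
Proof.
move=> m0 cop xm.
have hx : x != 0 by apply: contra_eq_neq xm => ->; rewrite expr0n eqn0Ngt m0 eq_sym oner_eq0.
have [a0 _] := Bezoutl #|F|.-1 m0.
rewrite (eqnP cop) => /dvdnP [k hk].
have : x ^+ (1 + a0 * #|F|.-1) = 1 by rewrite hk mulnC exprM xm expr1n.
by rewrite exprD expr1 mulnC exprM expf_N // expr1n mulr1.
Qed.

End Unity.

Lemma pow4 k : exists j, (4 ^ k = 3 * j + 1)%N.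
Proof.
elim: k => [|k [j ih]]; first by exists 0%N.
by exists (4 * j + 1)%N; rewrite expnS ih; lia.
Qed.

Lemma pow8 k : exists j, (8 ^ k = 7 * j + 1)%N.
Proof.
elim: k => [|k [j ih]]; first by exists 0%N.
by exists (8 * j + 1)%N; rewrite expnS ih; lia.
Qed.

Lemma dvd3 n : (3 %| 2 ^ n - 1)%N = ~~ odd n.
Proof.
have e : (2 ^ n = 4 ^ n./2 * 2 ^ odd n)%N.
  by rewrite -[in LHS](odd_double_half n) expnD -mul2n expnM mulnC.
have [j hj] := pow4 n./2.
rewrite e hj; case: (odd n) => /=; rewrite ?expn1 ?expn0.
  apply/negbTE; apply/negP => /dvdnP [k hk]; lia.
by apply/dvdnP; exists j; lia.
Qed.

Lemma dvd7 n : (7 %| 2 ^ n - 1)%N = (3 %| n)%N.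
Proof.
have e : (2 ^ n = 8 ^ (n %/ 3) * 2 ^ (n %% 3))%N.
  by rewrite {1}(divn_eq n 3) [(n %/ 3 * 3)%N]mulnC expnD expnM.
have [j hj] := pow8 (n %/ 3).
rewrite e hj /dvdn.
have : (n %% 3 < 3)%N by rewrite ltn_mod.
case: (n %% 3)%N => [|[|[|r]]] // _ /=.
- by rewrite (_ : ((7 * j + 1) * 2 ^ 0 - 1 = j * 7)%N) ?modnMl //; lia.
- by rewrite (_ : ((7 * j + 1) * 2 ^ 1 - 1 = (2 * j) * 7 + 1)%N) ?modnMDl //; lia.
- by rewrite (_ : ((7 * j + 1) * 2 ^ 2 - 1 = (4 * j) * 7 + 3)%N) ?modnMDl //; lia.
Qed.

Section Roots.
Variable F : finFieldType.
Variable n : nat.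
Hypothesis hF : #|F| = (2 ^ n)%N.
Hypothesis h2 : (2 : F) = 0.

Lemma hF' : #|F|.-1 = (2 ^ n - 1)%N.
Proof. by rewrite hF subn1. Qed.

Lemma one3 : (1 + 1 + 1 : F) = 1.
Proof. by rewrite (addxx h2) add0r. Qed.

Lemma cardG0 : #|[set t : F | t ^+ 2 + t + 1 == 0]| = if odd n then 0%N else 2%N.
Proof.
have n1 : (1 ^+ 2 + 1 + 1 == 0 :> F) = false by rewrite expr1n one3 oner_eq0.
have key (t : F) : (t ^+ 3 == 1) = (t == 1) || (t ^+ 2 + t + 1 == 0).
  rewrite -subr_eq0 (_ : t ^+ 3 - 1 = (t - 1) * (t ^+ 2 + t + 1)); last by ring.
  by rewrite mulf_eq0 subr_eq0.
case: ifP => hn.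
  apply/eqP; rewrite cards_eq0; apply/eqP/setP => t; rewrite !inE.
  apply/negbTE/negP => ht.
  have t3 : t ^+ 3 = 1 by apply/eqP; rewrite key ht orbT.
  have cop : coprime 3 #|F|.-1 by rewrite prime_coprime // hF' dvd3 hn.
  by move: ht; rewrite (@unity_coprime F 3 t isT cop t3) expr1n one3 oner_eq0.
have := @unity_card F 3 isT; rewrite hF' dvd3 hn => /(_ isT).
have -> : [set t : F | t ^+ 3 == 1] = 1 |: [set t | t ^+ 2 + t + 1 == 0].
  by apply/setP => t; rewrite !inE key.
by rewrite cardsU1 inE n1 /= add1n => -[].
Qed.

Lemma cardR1 : #|[set x : F | x ^+ 3 + x + 1 == 0]| = if (3 %| n)%N then 3%N else 0%N.
Proof.
have n1 : (1 ^+ 3 + 1 + 1 == 0 :> F) = false by rewrite expr1n one3 oner_eq0.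
have n2 : (1 ^+ 3 + 1 ^+ 2 + 1 == 0 :> F) = false by rewrite !expr1n one3 oner_eq0.
have key (x : F) : (x ^+ 7 == 1) =
   [|| x == 1, x ^+ 3 + x + 1 == 0 | x ^+ 3 + x ^+ 2 + 1 == 0].
  rewrite -(add_eq0 h2).
  rewrite (_ : x ^+ 7 + 1 = (x + 1) * (x ^+ 3 + x + 1) * (x ^+ 3 + x ^+ 2 + 1)
      + 2 * (- (x ^+ 6 + x ^+ 5 + 2 * x ^+ 4 + 2 * x ^+ 3 + x ^+ 2 + x))); last by ring.
  by rewrite h2 mul0r addr0 !mulf_eq0 (add_eq0 h2) orbA.
case: ifP => hn.
  have c7 := @unity_card F 7 isT; rewrite hF' dvd7 hn in c7; have {c7} := c7 isT.
  set R1 := [set x : F | x ^+ 3 + x + 1 == 0].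
  set R2 := [set x : F | x ^+ 3 + x ^+ 2 + 1 == 0].
  have -> : [set x : F | x ^+ 7 == 1] = 1 |: (R1 :|: R2).
    by apply/setP => x; rewrite !inE key.
  rewrite cardsU1 !inE n1 n2 /= add1n => -[] hU.
  have I0 : R1 :&: R2 = set0.
    apply/setP => x; rewrite !inE; apply/negbTE/negP => /andP[/eqP p1 /eqP p2].
    have : x * (x + 1) = 0.
      rewrite (_ : x * (x + 1) = (x ^+ 3 + x + 1) + (x ^+ 3 + x ^+ 2 + 1) + 2 * (- (x ^+ 3 + 1))); last by ring.
      by rewrite p1 p2 h2 !mul0r !addr0.
    move/eqP; rewrite mulf_eq0 (add_eq0 h2) => /orP [] /eqP hx.
      by move: p1; rewrite hx expr0n /= !add0r => /eqP; rewrite oner_eq0.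
    by move: p1; rewrite hx => /eqP; rewrite n1.
  have e12 : #|R2| = #|R1|.
    have -> : R2 = GRing.inv @^-1: R1.
      apply/setP => x; rewrite !inE.
      have [->|hx] := eqVneq x 0.
        by rewrite invr0 !expr0n /= !add0r.
      rewrite (_ : x^-1 ^+ 3 + x^-1 + 1 = (x ^+ 3 + x ^+ 2 + 1) / x ^+ 3); last by field.
      by rewrite mulf_eq0 invr_eq0 expf_eq0 (negbTE hx) andbF orbF.
    by rewrite card_preimset //; exact: invr_inj.
  have := cardsUI R1 R2; rewrite I0 cards0 hU e12; by move=> h; apply/eqP; rewrite -(@eqn_pmul2l 2) // mul2n -addnn -h.
apply/eqP; rewrite cards_eq0; apply/eqP/setP => x; rewrite !inE.
apply/negbTE/negP => hx.
have x7 : x ^+ 7 = 1 by apply/eqP; rewrite key hx orbT.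
have cop : coprime 7 #|F|.-1 by rewrite prime_coprime // hF' dvd7 hn.
by move: hx; rewrite (@unity_coprime F 7 x isT cop x7) expr1n one3 oner_eq0.
Qed.

End Roots.

Section Conds.
Variable F : finFieldType.
Hypothesis h2 : (2 : F) = 0.
Variables a b : F.
Hypotheses (ha : a != 0) (hb : b != 0) (hab : a != b).

Lemma A_e23 : Aof a b -> e2 a b + e3 a b = 1.
Proof.
rewrite /Aof /e2 /e3 => /orP [/orP [] | ] /eqP H.
- rewrite H (_ : 1 ^+ 2 + 1 * b + b ^+ 2 + 1 * b * (1 + b) = 1 + 2 * (b + b ^+ 2)); last by ring.
  by rewrite h2 mul0r addr0.
- rewrite H (_ : a ^+ 2 + a * 1 + 1 ^+ 2 + a * 1 * (a + 1) = 1 + 2 * (a + a ^+ 2)); last by ring.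
  by rewrite h2 mul0r addr0.
- have -> : a = 1 + b by apply/eqP; rewrite -(add_eq h2) H.
  rewrite (_ : (1 + b) ^+ 2 + (1 + b) * b + b ^+ 2 + (1 + b) * b * (1 + b + b)
     = 1 + 2 * (2 * b + 3 * b ^+ 2 + b ^+ 3)); last by ring.
  by rewrite h2 mul0r addr0.
Qed.

Lemma cV_E : condV a b = (Aof a b && (e2 a b == 0)) || (e2 a b == e3 a b).
Proof.
rewrite /condV; case: ifP => hA /=; last by [].
suff -> : (e2 a b == e3 a b) = false by rewrite orbF.
apply/negbTE/negP => /eqP E; have := A_e23 hA; rewrite E (addxx h2) => /eqP.
by rewrite eq_sym oner_eq0.
Qed.

Lemma cW_E : condW a b = (e2 a b == 1).
Proof.
rewrite /condW; have [E|_] := eqVneq (e2 a b) 1; last by rewrite andbF.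
suff hnA : ~~ Aof a b by rewrite hnA.
apply/negP => hA.
have := A_e23 hA; rewrite E => /eqP; rewrite eq_sym eq_addr.
by rewrite (negbTE (e3_neq0 h2 ha hb hab)).
Qed.

End Conds.

Local Close Scope ring_scope.

Section CardGen.
Variable T : finType.

Lemma cardP (Q : pred T) : #|[set x | Q x]| = \sum_x (Q x : nat).
Proof.
rewrite -sum1_card big_mkcond /=; apply: eq_bigr => x _; rewrite inE.
by case: (Q x).
Qed.

Lemma split_card (P X : pred T) :
  #|[set x | P x]| = #|[set x | P x && X x]| + #|[set x | P x && ~~ X x]|.
Proof.
rewrite !cardP -big_split /=; apply: eq_bigr => x _.
by case: (P x); case: (X x).
Qed.

Lemma or_card (P X Y : pred T) :
  #|[set x | P x && (X x || Y x)]| + #|[set x | P x && X x && Y x]|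
  = #|[set x | P x && X x]| + #|[set x | P x && Y x]|.
Proof.
rewrite !cardP -!big_split /=; apply: eq_bigr => x _.
by case: (P x); case: (X x); case: (Y x).
Qed.

Lemma xor_card (P X Y : pred T) :
  #|[set x | P x && (X x (+) Y x)]| + #|[set x | P x && X x && Y x]| + #|[set x | P x && X x && Y x]|
  = #|[set x | P x && X x]| + #|[set x | P x && Y x]|.
Proof.
rewrite !cardP -!big_split /=; apply: eq_bigr => x _.
by case: (P x); case: (X x); case: (Y x).
Qed.

Lemma none_card (P X Y : pred T) :
  #|[set x | P x && ~~ X x && ~~ Y x]| + #|[set x | P x && X x]| + #|[set x | P x && Y x]|
  = #|[set x | P x]| + #|[set x | P x && X x && Y x]|.
Proof.
rewrite !cardP -!big_split /=; apply: eq_bigr => x _.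
by case: (P x); case: (X x); case: (Y x).
Qed.

End CardGen.

Local Open Scope ring_scope.

Section Count.
Variable F : finFieldType.
Variable n : nat.
Hypothesis hn : (1 <= n)%N.
Hypothesis hF : #|F| = (2 ^ n)%N.
Hypothesis h2 : (2 : F) = 0.

Definition ND (p : F * F) : bool := p.1 * p.2 * (p.1 + p.2) != 0.
Definition gg (t : F) := t ^+ 2 + t + 1.
Definition T1 := [set t : F | (t != 0) && (t != 1) && (gg t != 0)].
Definition sq (x : F) := x ^+ (2 ^ n.-1).

Lemma ND_E p : ND p = [&& p.1 != 0, p.2 != 0 & p.1 != p.2].
Proof. by rewrite /ND !mulf_eq0 !negb_or (add_eq0 h2) andbA. Qed.

Lemma sqK x : sq x ^+ 2 = x.
Proof. by rewrite /sq -exprM -expnSr prednK // -hF expf_card. Qed.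

Lemma sq_inj (u v : F) : u ^+ 2 = v ^+ 2 -> u = v.
Proof.
move=> H; have : (u + v) ^+ 2 = 0.
  rewrite (_ : (u + v) ^+ 2 = u ^+ 2 + v ^+ 2 + 2 * (u * v)); last by ring.
  by rewrite H h2 mul0r addr0 (addxx h2).
by move/eqP; rewrite expf_eq0 /= (add_eq0 h2) => /eqP.
Qed.

Lemma e2_t (a t : F) : e2 a (a * t) = a ^+ 2 * gg t.
Proof. by rewrite /e2 /gg; ring. Qed.

Lemma e3_t (a t : F) : e3 a (a * t) = a ^+ 3 * (t * (1 + t)).
Proof. by rewrite /e3; ring. Qed.

Lemma gg0 : gg 0 = 1. Proof. by rewrite /gg expr0n /= !add0r. Qed.
Lemma gg1 : gg 1 = 1. Proof. by rewrite /gg expr1n one3. Qed.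

Lemma mul_div (a b : F) : a != 0 -> a * (b / a) = b.
Proof. by move=> ha; rewrite mulrC divfK. Qed.

Lemma card_S1 : #|[set p | ND p && (e2 p.1 p.2 == 1)]| = #|T1|.
Proof.
pose h t := sq (gg t)^-1.
have hK (t : F) : gg t != 0 -> h t ^+ 2 * gg t = 1 by move=> gt; rewrite sqK mulVf.
have hnz (t : F) : gg t != 0 -> h t != 0.
  by move=> gt; apply/eqP => h0; move: (hK t gt); rewrite h0 expr0n /= mul0r => /eqP; rewrite eq_sym oner_eq0.
have -> : [set p | ND p && (e2 p.1 p.2 == 1)] = [set (h t, h t * t) | t in T1].
  apply/setP => -[a b]; rewrite inE /=; apply/idP/imsetP.
  - rewrite ND_E /= => /andP [/and3P [ha hb hab] E].
    have eb : b = a * (b / a) by rewrite mul_div.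
    have E' : a ^+ 2 * gg (b / a) = 1 by apply/eqP; rewrite -e2_t -eb.
    have gt : gg (b / a) != 0 by apply: contra_eq_neq E' => ->; rewrite mulr0 eq_sym oner_neq0.
    exists (b / a).
      rewrite inE mulf_neq0 ?invr_eq0 //= gt andbT.
      apply: contra_neq hab => H; move: eb; rewrite H mulr1 => ->.
      by [].
    have ea : a = h (b / a) by apply: sq_inj; apply: (mulIf gt); rewrite E' hK.
    by rewrite -ea -eb.
  - move=> [t]; rewrite inE => /andP [/andP [t0 t1] gt] [-> ->].
    rewrite ND_E /= e2_t hK // eqxx andbT hnz //= mulf_neq0 ?hnz //=.
    apply: contra_neq t1 => H; apply: (mulfI (hnz t gt)); by rewrite -H mulr1.
rewrite card_in_imset // => t s; rewrite !inE => /andP [_ gt] /andP [_ gs] [E1 E2].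
by apply: (mulfI (hnz t gt)); rewrite E2 E1.
Qed.


Lemma card_S23 : #|[set p | ND p && (e2 p.1 p.2 == e3 p.1 p.2)]| = #|T1|.
Proof.
pose k t := gg t / (t * (1 + t)).
have t1nz (t : F) : t != 1 -> 1 + t != 0 by move=> t1; rewrite (add_eq0 h2) eq_sym.
have knz (t : F) : t != 0 -> t != 1 -> gg t != 0 -> k t != 0.
  by move=> t0 t1 gt; rewrite /k mulf_neq0 // invr_eq0 mulf_neq0 // t1nz.
have kK (t : F) : t != 0 -> t != 1 -> k t * (t * (1 + t)) = gg t.
  by move=> t0 t1; rewrite /k divfK // mulf_neq0 // t1nz.
have -> : [set p | ND p && (e2 p.1 p.2 == e3 p.1 p.2)] = [set (k t, k t * t) | t in T1].
  apply/setP => -[a b]; rewrite inE /=; apply/idP/imsetP.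
  - rewrite ND_E /= => /andP [/and3P [ha hb hab] E].
    have eb : b = a * (b / a) by rewrite mul_div.
    set t := b / a in eb *.
    have t0 : t != 0 by rewrite mulf_neq0 ?invr_eq0.
    have t1 : t != 1.
      apply: contra_neq hab => H; move: eb; rewrite H mulr1 => ->.
      by [].
    have E' : gg t = a * (t * (1 + t)).
      apply: (mulfI (expf_neq0 2 ha)); move/eqP: E; rewrite eb e2_t e3_t => ->; ring.
    have gt : gg t != 0 by rewrite E' (mulf_neq0 ha) // (mulf_neq0 t0) // t1nz.
    exists t; first by rewrite inE t0 t1 gt.
    have ea : a = k t by rewrite /k E' mulfK // mulf_neq0 // t1nz.
    by rewrite -ea -eb.
  - move=> [t]; rewrite inE => /andP [/andP [t0 t1] gt] [-> ->].
    rewrite ND_E /= e2_t e3_t knz //= mulf_neq0 ?knz //=.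
    rewrite (_ : k t ^+ 3 * (t * (1 + t)) = k t ^+ 2 * (k t * (t * (1 + t)))); last by ring.
    rewrite kK // eqxx andbT.
    have kt := knz t t0 t1 gt.
    apply: contra_neq t1 => H; apply: (mulfI kt); by rewrite -H mulr1.
rewrite card_in_imset // => t s; rewrite !inE => /andP [/andP [t0 t1] gt] /andP [_ gs] [E1 E2].
by apply: (mulfI (knz t t0 t1 gt)); rewrite E2 E1.
Qed.


Definition G0 := [set t : F | t ^+ 2 + t + 1 == 0].

Lemma G0P t : t \in G0 -> [/\ t != 0, t != 1 & gg t = 0].
Proof.
rewrite inE => /eqP H; split; last by [].
- by apply: contra_eq_neq H => ->; rewrite -/(gg 0) gg0 oner_neq0.
- by apply: contra_eq_neq H => ->; rewrite -/(gg 1) gg1 oner_neq0.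
Qed.

Lemma card_SA0 : #|[set p | ND p && (Aof p.1 p.2 && (e2 p.1 p.2 == 0))]| = (3 * #|G0|)%N.
Proof.
set X1 := [set ((1 : F), t) | t in G0].
set X2 := [set (t, (1 : F)) | t in G0].
set X3 := [set (t, 1 + t) | t in G0].
have -> : [set p | ND p && (Aof p.1 p.2 && (e2 p.1 p.2 == 0))] = X1 :|: X2 :|: X3.
  apply/setP => -[a b]; rewrite !inE /=; apply/idP/idP.
  - rewrite ND_E /= => /andP [/and3P [ha hb hab] /andP [hA /eqP E]].
    move: hA; rewrite /Aof => /orP [/orP [] | ] /eqP H.
    + apply/orP; left; apply/orP; left; apply/imsetP; exists b; last by rewrite H.
      by rewrite inE -E H /e2; apply/eqP; ring.
    + apply/orP; left; apply/orP; right; apply/imsetP; exists a; last by rewrite H.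
      by rewrite inE -E H /e2; apply/eqP; ring.
    + have eb : b = 1 + a by apply/eqP; rewrite -(add_eq h2) addrC H.
      apply/orP; right; apply/imsetP; exists a; last by rewrite eb.
      rewrite inE; apply/eqP; rewrite -E eb /e2.
      rewrite (_ : a ^+ 2 + a * (1 + a) + (1 + a) ^+ 2 = a ^+ 2 + a + 1 + 2 * (a ^+ 2 + a)); last by ring.
      by rewrite h2 mul0r addr0.
  - move=> /orP [/orP [] | ] /imsetP [t /G0P [t0 t1 gt] [-> ->]].
    + rewrite ND_E /= oner_neq0 t0 eq_sym t1 /Aof eqxx /=.
      by rewrite -gt /gg /e2; apply/eqP; ring.
    + rewrite ND_E /= oner_neq0 t0 t1 /Aof eqxx orbT /=.
      by rewrite -gt /gg /e2; apply/eqP; ring.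
    + rewrite ND_E /= t0 (add_eq0 h2) eq_sym t1 eq_addl oner_neq0 /=.
      rewrite /Aof addrCA (addxx h2) addr0 eqxx orbT /=.
      rewrite -gt /gg /e2.
      rewrite (_ : t ^+ 2 + t * (1 + t) + (1 + t) ^+ 2 = t ^+ 2 + t + 1 + 2 * (t ^+ 2 + t)); last by ring.
      by rewrite h2 mul0r addr0.
have c1 : #|X1| = #|G0| by rewrite card_imset // => x y [].
have c2 : #|X2| = #|G0| by rewrite card_imset // => x y [].
have c3 : #|X3| = #|G0| by rewrite card_imset // => x y [].
have i12 : X1 :&: X2 = set0.
  apply/setP => -[u v]; rewrite !inE; apply/negbTE/negP => /andP [/imsetP [t /G0P [_ t1 _] [_ ->]] /imsetP [s _ [_ H]]].
  by rewrite H eqxx in t1.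
have i3 : (X1 :|: X2) :&: X3 = set0.
  apply/setP => -[u v]; rewrite !inE; apply/negbTE/negP => /andP [/orP [] /imsetP [t /G0P [t0 t1 _] [E1 E2]] /imsetP [s /G0P [s0 s1 _] [E3 E4]]].
  - by move: s1; rewrite -E3 E1 eqxx.
  - have : (1 : F) == 1 + s by rewrite -E4 E2.
    by rewrite eq_addr (negbTE s0).
have := cardsUI (X1 :|: X2) X3; rewrite i3 cards0 addn0 => ->.
have := cardsUI X1 X2; rewrite i12 cards0 addn0 => ->.
by rewrite c1 c2 c3; lia.
Qed.


Definition T2 := [set t : F | (t != 0) && (t != 1)].

Lemma card_T2 : (#|T2| + 2 = #|F|)%N.
Proof.
have -> : T2 = ~: [set 0; 1] by apply/setP => t; rewrite !inE negb_or.
by rewrite addnC -(cardsC [set 0; 1]) cards2 eq_sym oner_neq0.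
Qed.

Lemma card_T12 : #|T2| = (#|T1| + #|G0|)%N.
Proof.
rewrite /T2 (split_card _ (fun t => gg t != 0)) /T1; congr (_ + _)%N.
apply: eq_card => t; rewrite !inE negbK; apply/idP/idP.
  by move=> /andP [_ /eqP <-].
by move=> H; have [t0 t1 gt] := @G0P t ltac:(by rewrite inE); rewrite t0 t1 gt eqxx.
Qed.

Lemma card_ND : #|[set p | ND p]| = (#|F|.-1 * #|T2|)%N.
Proof.
have -> : [set p | ND p] = [set (u.1, u.1 * u.2) | u in setX [set~ 0] T2].
  apply/setP => -[a b]; rewrite inE /=; apply/idP/imsetP.
  - rewrite ND_E /= => /and3P [ha hb hab].
    exists (a, b / a); last by rewrite /= mul_div.
    rewrite !inE /= ha mulf_neq0 ?invr_eq0 //=.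
    apply: contra_neq hab => H; rewrite -[b](mul_div b ha) H mulr1 //.
  - move=> [[u t]]; rewrite !inE /= => /andP [u0 /andP [t0 t1]] [-> ->].
    rewrite ND_E /= u0 mulf_neq0 //=.
    apply: contra_neq t1 => H; apply: (mulfI u0); by rewrite -H mulr1.
rewrite card_in_imset ?cardsX ?cardsC1 // => -[u t] [v s]; rewrite !inE /= => /andP [u0 _] _ [E1 E2].
by rewrite -E1 in E2 *; rewrite (mulfI u0 E2).
Qed.

End Count.

Lemma P2 k : (2 ^+ k : int) = Posz (2 ^ k)%N.
Proof. by rewrite -natz natrX. Qed.

Section S8.
Variable F : finFieldType.
Variable n : nat.
Hypothesis hF : #|F| = (2 ^ n)%N.
Hypothesis h2 : (2 : F) = 0.

Lemma card_S8 : #|[set p : F * F | ND p && (e2 p.1 p.2 == 1) && (e3 p.1 p.2 == 1)]|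
   = if (3 %| n)%N then 6%N else 0%N.
Proof.
set R1 := [set x : F | x ^+ 3 + x + 1 == 0].
have -> : [set p : F * F | ND p && (e2 p.1 p.2 == 1) && (e3 p.1 p.2 == 1)] =
          [set p | (p.1 \in R1) && (p.2 \in R1) && (p.1 != p.2)].
  apply/setP => -[a b]; rewrite !inE /=; apply/idP/idP.
  - rewrite (ND_E h2) /= => /andP [/andP [/and3P [ha hb hab] /eqP E2] /eqP E3].
    rewrite hab andbT; apply/andP; split.
      rewrite (_ : a ^+ 3 + a + 1 = a ^+ 3 + e2 a b * a + e3 a b); last by rewrite E2 E3 mul1r.
      rewrite (_ : a ^+ 3 + e2 a b * a + e3 a b = 2 * (a ^+ 3 + a ^+ 2 * b + a * b ^+ 2)).
        by rewrite h2 mul0r.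
      by rewrite /e2 /e3; ring.
    rewrite (_ : b ^+ 3 + b + 1 = b ^+ 3 + e2 a b * b + e3 a b); last by rewrite E2 E3 mul1r.
    rewrite (_ : b ^+ 3 + e2 a b * b + e3 a b = 2 * (b ^+ 3 + a ^+ 2 * b + a * b ^+ 2)).
      by rewrite h2 mul0r.
    by rewrite /e2 /e3; ring.
  - move=> /andP [/andP [/eqP pa /eqP pb] hab].
    have ha : a != 0 by apply: contra_eq_neq pa => ->; rewrite expr0n /= !add0r oner_neq0.
    have hb : b != 0 by apply: contra_eq_neq pb => ->; rewrite expr0n /= !add0r oner_neq0.
    have E2 : e2 a b + 1 = 0.
      apply: (mulfI (hab0 h2 hab)); rewrite mulr0.
      rewrite (_ : (a + b) * (e2 a b + 1) = (a ^+ 3 + a + 1) + (b ^+ 3 + b + 1) + 2 * (a ^+ 2 * b + a * b ^+ 2 - 1)); last by rewrite /e2; ring.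
      by rewrite pa pb h2 !mul0r !addr0.
    have E3 : e3 a b + 1 = 0.
      rewrite (_ : e3 a b + 1 = a * (e2 a b + 1) + (a ^+ 3 + a + 1) - 2 * (a ^+ 3 + a)); last by rewrite /e2 /e3; ring.
      by rewrite E2 pa h2 !mul0r mulr0 !addr0 subr0.
    rewrite (ND_E h2) /= ha hb hab /= -(add_eq0 h2) E2 eqxx /=.
    by rewrite -(add_eq0 h2) E3.
have Hs := split_card [pred p : F * F | (p.1 \in R1) && (p.2 \in R1)] [pred p : F * F | p.1 != p.2].
have Hx : #|[set p : F * F | [pred p : F * F | (p.1 \in R1) && (p.2 \in R1)] p]| = (#|R1| * #|R1|)%N.
  rewrite -cardsX; apply: eq_card => -[u v]; by rewrite !inE.
have Hd : #|[set p : F * F | [pred p : F * F | (p.1 \in R1) && (p.2 \in R1)] p &&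
                ~~ [pred p : F * F | p.1 != p.2] p]| = #|R1|.
  have -> : [set p : F * F | [pred p : F * F | (p.1 \in R1) && (p.2 \in R1)] p &&
                ~~ [pred p : F * F | p.1 != p.2] p] = [set (x, x) | x in R1].
    apply/setP => -[u v]; rewrite !inE /= negbK; apply/idP/imsetP.
      by move=> /andP [/andP [hu _] /eqP <-]; exists u; rewrite ?inE.
    by move=> [x hx [-> ->]]; rewrite inE in hx; rewrite hx eqxx.
  by rewrite card_imset // => x y [].
rewrite Hx Hd in Hs.
have Hr := cardR1 hF h2; rewrite -/R1 in Hr.
have -> : [set p | (p.1 \in R1) && (p.2 \in R1) && (p.1 != p.2)] =
   [set p : F * F | [pred p : F * F | (p.1 \in R1) && (p.2 \in R1)] p && [pred p : F * F | p.1 != p.2] p].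
  by apply/setP => p; rewrite !inE.
move: Hs; rewrite Hr; case: ifP => _ H; apply/eqP; [rewrite -(eqn_add2r 3) | rewrite -(eqn_add2r 0)]; apply/eqP; exact: (esym H).
Qed.

End S8.

Unset Implicit Arguments.

Theorem mainTheorem2 (n : nat) (F : finFieldType) :
  (2 <= n)%N -> #|F| = (2 ^ n)%N ->
  [/\ (omega F 8 = if (3 %| n)%N then 6 else 0)%N,
      (omega F 4)%:Z =
        (if ~~ odd n then
           (if (3 %| n)%N then 2 ^+ n.+1 - 14 else 2 ^+ n.+1 - 2)
         else
           (if (3 %| n)%N then 2 ^+ n.+1 - 16 else 2 ^+ n.+1 - 4)) :> int
    & (omega F 0)%:Z =
        (if ~~ odd n then
           (if (3 %| n)%N then 2 ^+ (2 * n) - 5 * 2 ^+ n + 10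
            else 2 ^+ (2 * n) - 5 * 2 ^+ n + 4)
         else
           (if (3 %| n)%N then 2 ^+ (2 * n) - 5 * 2 ^+ n + 12
            else 2 ^+ (2 * n) - 5 * 2 ^+ n + 6)) :> int].
Proof.
move=> hn2 hF.
have hn : (1 <= n)%N by apply: ltnW.
have h2 : (2 : F) = 0 by apply: pcharf0; apply: (card_finPcharP hF).
have NDE (p : F * F) : ND p -> [/\ p.1 != 0, p.2 != 0 & p.1 != p.2] by rewrite (ND_E h2) => /and3P.
have om i : omega F i = #|[set p : F * F | ND p && ((4 * condV p.1 p.2 + 4 * condW p.1 p.2)%N == i)]|.
  rewrite /omega; apply: eq_card => p; rewrite !inE.
  have -> : (p.1 * p.2 * (p.1 + p.2) != 0) = ND p by [].
  case: (boolP (ND p)) => nd //=.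
  by have [ha hb hab] := NDE p nd; rewrite (nablaE h2 ha hb hab).
have o8 : omega F 8 = #|[set p : F * F | ND p && condV p.1 p.2 && condW p.1 p.2]|.
  rewrite om; apply: eq_card => p; rewrite !inE.
  by case: (ND p) (condV p.1 p.2) (condW p.1 p.2) => [] [] [].
have o4 : omega F 4 = #|[set p : F * F | ND p && (condV p.1 p.2 (+) condW p.1 p.2)]|.
  rewrite om; apply: eq_card => p; rewrite !inE.
  by case: (ND p) (condV p.1 p.2) (condW p.1 p.2) => [] [] [].
have o0 : omega F 0 = #|[set p : F * F | ND p && ~~ condV p.1 p.2 && ~~ condW p.1 p.2]|.
  rewrite om; apply: eq_card => p; rewrite !inE.
  by case: (ND p) (condV p.1 p.2) (condW p.1 p.2) => [] [] [].
have nV : #|[set p : F * F | ND p && condV p.1 p.2]| = (3 * #|G0 F| + #|T1 F|)%N.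
  have -> : [set p : F * F | ND p && condV p.1 p.2] = [set p : F * F | ND p && ((Aof p.1 p.2 && (e2 p.1 p.2 == 0)) || (e2 p.1 p.2 == e3 p.1 p.2))].
    by apply/setP => p; rewrite !inE (cV_E h2).
  have := or_card (@ND F) (fun p => Aof p.1 p.2 && (e2 p.1 p.2 == 0)) (fun p => e2 p.1 p.2 == e3 p.1 p.2).
  have -> : [set x : F * F | ND x && (Aof x.1 x.2 && (e2 x.1 x.2 == 0)) && (e2 x.1 x.2 == e3 x.1 x.2)] = set0.
    apply/setP => p; rewrite !inE; apply/negbTE/negP => /andP [/andP [_ /andP [hA /eqP E0]] /eqP E].
    have := A_e23 h2 hA; rewrite -E E0 addr0 => /eqP; by rewrite eq_sym oner_eq0.
  by rewrite cards0 addn0 (card_SA0 hn hF h2) (card_S23 h2).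
have nW : #|[set p : F * F | ND p && condW p.1 p.2]| = #|T1 F|.
  rewrite -(card_S1 hn hF h2); apply: eq_card => p; rewrite !inE.
  case: (boolP (ND p)) => nd //=.
  by have [ha hb hab] := NDE p nd; rewrite (cW_E h2 ha hb hab).
have n8 : #|[set p : F * F | ND p && condV p.1 p.2 && condW p.1 p.2]| = if (3 %| n)%N then 6%N else 0%N.
  rewrite -(card_S8 hF h2); apply: eq_card => p; rewrite !inE.
  case: (boolP (ND p)) => nd //=.
  have [ha hb hab] := NDE p nd; rewrite (cW_E h2 ha hb hab) (cV_E h2).
  case E: (e2 p.1 p.2 == 1); rewrite ?andbF ?andbT //=.
  by rewrite (eqP E) oner_eq0 andbF /= eq_sym.
have X4 : (#|[set p : F * F | ND p && (condV p.1 p.2 (+) condW p.1 p.2)]|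
   + #|[set p : F * F | ND p && condV p.1 p.2 && condW p.1 p.2]|
   + #|[set p : F * F | ND p && condV p.1 p.2 && condW p.1 p.2]|
   = #|[set p : F * F | ND p && condV p.1 p.2]| + #|[set p : F * F | ND p && condW p.1 p.2]|)%N.
  exact: (xor_card (@ND F) (fun p => condV p.1 p.2) (fun p => condW p.1 p.2)).
have X0 : (#|[set p : F * F | ND p && ~~ condV p.1 p.2 && ~~ condW p.1 p.2]|
   + #|[set p : F * F | ND p && condV p.1 p.2]| + #|[set p : F * F | ND p && condW p.1 p.2]|
   = #|[set p : F * F | ND p]| + #|[set p : F * F | ND p && condV p.1 p.2 && condW p.1 p.2]|)%N.
  exact: (none_card (@ND F) (fun p => condV p.1 p.2) (fun p => condW p.1 p.2)).
rewrite -o4 -o0 n8 nV nW in X4 X0.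
have Gc : #|G0 F| = if odd n then 0%N else 2%N by rewrite /G0 (cardG0 hF h2).
have T2a := card_T2 F.
have T2b := card_T12 h2.
have NDc := card_ND h2.
rewrite hF in T2a NDc.
have Q2 : (2 ^ (2 * n) = 2 ^ n * 2 ^ n)%N by rewrite mulnC expnM.
rewrite !P2 expnS Q2 o8 n8.
move: X4 X0 T2a T2b NDc Gc.
set t1 := #|T1 F|; set t2 := #|T2 F|; set g := #|G0 F|; set nd := #|[set p : F * F | ND p]|.
set w4 := omega F 4; set w0 := omega F 0; set q := (2 ^ n)%N.
clearbody t1 t2 g nd w4 w0 q.
move=> X4 X0 T2a T2b NDc Gc.
have HN : (nd + 3 * q = q * q + 2)%N.
  rewrite NDc -T2a; rewrite addn2 /=; nia.
case: (3 %| n)%N X4 X0 => X4 X0; case: (odd n) Gc => /= Gc; split => //; lia.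
Qed.
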